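(* Let $\mathcal{H}_A,\mathcal{H}_B$ be finite-dimensional Hilbert spaces, $d_A=\dim\mathcal{H}_A\geq2$, with a fixed reference basis $\{|i\rangle_A\}$ of $\mathcal{H}_A$. For every state $\rho_{AB}$ on $\mathcal{H}_A\otimes\mathcal{H}_B$, $$1+\frac{1}{d_A-1}C^{A|B}_{l_1}(\rho_{AB})\leq 2^{C^{A|B}_{\max}(\rho_{AB})}\leq 1+C^{A|B}_{l_1}(\rho_{AB}).$$
   Context: $D_{\max}(\rho\|\sigma)=\min\{\lambda\ge0:\rho\leq2^\lambda\sigma\}$. The set $\mathcal{IQ}$ of incoherent-quantum states consists of states $\sum_kp_k\sigma^A_k\otimes\tau^B_k$ with $\sigma^A_k$ diagonal in $\{|i\rangle_A\}$ and $\tau^B_k$ arbitrary states; $C^{A|B}_{\max}(\rho_{AB})=\min_{\sigma\in\mathcal{IQ}}D_{\max}(\rho_{AB}\|\sigma)$. Writing $\rho_{AB}=\sum_{i,j}|i\rangle\langle j|_A\otimes\rho^B_{ij}$, $C^{A|B}_{l_1}(\rho_{AB})=\sum_{i\neq j}\|\rho^B_{ij}\|_{\mathrm{tr}}$ with $\|X\|_{\mathrm{tr}}=\mathrm{Tr}\sqrt{X^\dagger X}$. Logarithms are base 2. *)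

(* Defs.v *)
From HB Require Import structures.
From mathcomp Require Import all_boot all_order all_algebra.
From mathcomp Require Import complex mxtens.
From mathcomp Require Import boolp classical_sets reals ereal exp.
From Stdlib Require Import ClassicalEpsilon.

Set Implicit Arguments.
Unset Strict Implicit.
Unset Printing Implicit Defensive.

Import Order.TTheory GRing.Theory Num.Theory.
Local Open Scope ring_scope.
Local Open Scope classical_set_scope.

Section QDefs.
Variable R : realType.
Local Notation C := R[i].

Definition adjmx m n (A : 'M[C]_(m, n)) : 'M[C]_(n, m) := (map_mx Num.conj A)^T.

Definition psd n (A : 'M[C]_n) : Prop :=
  adjmx A = A /\ forall v : 'cV[C]_n, 0 <= (adjmx v *m A *m v) 0 0.

Definition loewner n (A B : 'M[C]_n) : Prop := psd (B - A).

Definition is_state n (rho : 'M[C]_n) : Prop := psd rho /\ \tr rho = 1.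

Definition incoherent_state n (s : 'M[C]_n) : Prop :=
  is_state s /\ forall i j : 'I_n, i != j -> s i j = 0.

(* incoherent-quantum states sum_k p_k sigma_k^A (x) tau_k^B ;
   the tensor product uses mxtens (index (i,k) of A(x)B is i*dB + k) *)
Definition IQ (dA dB : nat) (sigma : 'M[C]_(dA * dB)) : Prop :=
  exists (K : nat) (p : 'I_K -> R) (s : 'I_K -> 'M[C]_dA) (t : 'I_K -> 'M[C]_dB),
    [/\ forall k, 0 <= p k, \sum_k p k = 1,
        forall k, incoherent_state (s k),
        forall k, is_state (t k) &
        sigma = \sum_k (real_complex R (p k)) *: (s k *t t k)].

Definition Dmax n (rho sigma : 'M[C]_n) : \bar R :=
  ereal_inf [set (l%:E)%E | l in
    [set l : R | 0 <= l /\ loewner rho (real_complex R (2 `^ l) *: sigma)]].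

Definition Cmax (dA dB : nat) (rho : 'M[C]_(dA * dB)) : \bar R :=
  ereal_inf [set Dmax rho s | s in @IQ dA dB].

Definition msqrt n (M : 'M[C]_n) : 'M[C]_n :=
  epsilon (inhabits 0) (fun S => psd S /\ S *m S = M).

Definition tracenorm n (X : 'M[C]_n) : R :=
  complex.Re (\tr (msqrt (adjmx X *m X))).

(* block rho^B_{ij} of rho_{AB} = sum_{ij} |i><j| (x) rho^B_{ij} *)
Definition blockB (dA dB : nat) (rho : 'M[C]_(dA * dB)) (i j : 'I_dA) : 'M[C]_dB :=
  \matrix_(k, l) rho (mxtens_index (i, k)) (mxtens_index (j, l)).

Definition Cl1 (dA dB : nat) (rho : 'M[C]_(dA * dB)) : R :=
  \sum_(i : 'I_dA) \sum_(j : 'I_dA | i != j) tracenorm (blockB rho i j).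

End QDefs.

(* Main.v *)
Require Import Defs.
From HB Require Import structures.
From mathcomp Require Import all_boot all_order all_algebra.
From mathcomp Require Import complex mxtens.
From mathcomp Require Import boolp classical_sets reals ereal exp.
From mathcomp Require Import spectral sesquilinear.
From mathcomp Require Import ring lra.
From Stdlib Require Import ClassicalEpsilon.

Set Implicit Arguments.
Unset Strict Implicit.
Unset Printing Implicit Defensive.
Import Order.TTheory GRing.Theory Num.Theory.
Local Open Scope ring_scope.


Section Aux.
Variable R : realType.
Local Notation C := R[i].

Lemma adjmxK m n (A : 'M[C]_(m,n)) : adjmx (adjmx A) = A.
Proof. by apply/matrixP => i j; rewrite !mxE conjCK. Qed.

Lemma adjmxM m n p (A : 'M[C]_(m,n)) (B : 'M[C]_(n,p)) :
  adjmx (A *m B) = adjmx B *m adjmx A.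
Proof.
apply/matrixP => i j; rewrite !mxE rmorph_sum; apply: eq_bigr => k _.
by rewrite !mxE rmorphM mulrC.
Qed.

Lemma adjmxD m n (A B : 'M[C]_(m,n)) : adjmx (A + B) = adjmx A + adjmx B.
Proof. by apply/matrixP => i j; rewrite !mxE rmorphD. Qed.

Lemma adjmxN m n (A : 'M[C]_(m,n)) : adjmx (- A) = - adjmx A.
Proof. by apply/matrixP => i j; rewrite !mxE rmorphN. Qed.

Lemma adjmxB m n (A B : 'M[C]_(m,n)) : adjmx (A - B) = adjmx A - adjmx B.
Proof. by rewrite adjmxD adjmxN. Qed.

Lemma adjmxZ m n (c : C) (A : 'M[C]_(m,n)) : adjmx (c *: A) = c^* *: adjmx A.
Proof. by apply/matrixP => i j; rewrite !mxE rmorphM. Qed.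

Lemma adjmx0 m n : adjmx (0 : 'M[C]_(m,n)) = 0.
Proof. by apply/matrixP => i j; rewrite !mxE rmorph0. Qed.

Lemma adjmx1 n : adjmx (1%:M : 'M[C]_n) = 1%:M.
Proof.
apply/matrixP => i j; rewrite !mxE eq_sym.
by rewrite conjC_nat.
Qed.

Lemma adjmx_sum m n (I : finType) (P : pred I) (F : I -> 'M[C]_(m,n)) :
  adjmx (\sum_(i | P i) F i) = \sum_(i | P i) adjmx (F i).
Proof.
apply/matrixP => i j; rewrite !mxE summxE rmorph_sum summxE.
by apply: eq_bigr => k _; rewrite !mxE.
Qed.

Lemma mxtrace_adj n (A : 'M[C]_n) : \tr (adjmx A) = (\tr A)^*.
Proof. by rewrite /mxtrace rmorph_sum; apply: eq_bigr => i _; rewrite !mxE. Qed.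

Lemma adj_delta n (i : 'I_n) : adjmx (delta_mx i 0 : 'cV[C]_n) = delta_mx 0 i.
Proof.
apply/matrixP => a b; rewrite !mxE.
by rewrite conjC_nat andbC.
Qed.

Lemma form_delta n (A : 'M[C]_n) i j :
  (adjmx (delta_mx i 0 : 'cV[C]_n) *m A *m (delta_mx j 0 : 'cV[C]_n)) 0 0 = A i j.
Proof. by rewrite adj_delta -rowE -colE !mxE. Qed.

Lemma psd_herm n (A : 'M[C]_n) : psd A -> adjmx A = A.
Proof. by case. Qed.

Lemma psd_congr n m (A : 'M[C]_n) (Y : 'M[C]_(n,m)) :
  psd A -> psd (adjmx Y *m A *m Y).
Proof.
move=> [hA fA]; split.
  by rewrite !adjmxM adjmxK hA mulmxA.
move=> v; have := fA (Y *m v).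
by rewrite adjmxM !mulmxA.
Qed.

Lemma psd1 n : psd (1%:M : 'M[C]_n).
Proof.
split; first exact: adjmx1.
move=> v; rewrite mulmx1 mxE; apply: sumr_ge0 => k _.
by rewrite !mxE mulrC mul_conjC_ge0.
Qed.

Lemma psd_gram m n (B : 'M[C]_(m,n)) : psd (adjmx B *m B).
Proof. by have := psd_congr B (psd1 m); rewrite mulmx1. Qed.

Lemma psd_add n (A B : 'M[C]_n) : psd A -> psd B -> psd (A + B).
Proof.
move=> [hA fA] [hB fB]; split; first by rewrite adjmxD hA hB.
by move=> v; rewrite mulmxDr mulmxDl mxE addr_ge0.
Qed.

Lemma psd0 n : psd (0 : 'M[C]_n).
Proof. by split; [exact: adjmx0 | move=> v; rewrite mulmx0 mul0mx mxE]. Qed.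

Lemma psd_sum n (I : finType) (P : pred I) (F : I -> 'M[C]_n) :
  (forall i, P i -> psd (F i)) -> psd (\sum_(i | P i) F i).
Proof.
move=> h; apply: (big_ind (fun M : 'M[C]_n => psd M)); [exact: psd0 | exact: psd_add | exact: h].
Qed.

Lemma psd_scale n (c : C) (A : 'M[C]_n) : 0 <= c -> psd A -> psd (c *: A).
Proof.
move=> c0 [hA fA]; split; first by rewrite adjmxZ hA geC0_conj.
by move=> v; rewrite -scalemxAr -scalemxAl mxE mulr_ge0.
Qed.

Lemma psd_diag_ge0 n (A : 'M[C]_n) i : psd A -> 0 <= A i i.
Proof. by move=> [_ fA]; have := fA (delta_mx i 0); rewrite form_delta. Qed.

Lemma psd_tr_ge0 n (A : 'M[C]_n) : psd A -> 0 <= \tr A.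
Proof. by move=> hA; apply: sumr_ge0 => i _; apply: psd_diag_ge0. Qed.

End Aux.


Section Spec.
Variable R : realType.
Local Notation C := R[i].
Local Open Scope sesquilinear_scope.

Lemma adjmx_tc m n (A : 'M[C]_(m,n)) : adjmx A = A ^t*.
Proof. by rewrite /adjmx map_trmx. Qed.

Lemma herm_spectral n (A : 'M[C]_n) : adjmx A = A ->
  exists (V : 'M[C]_n) (d : 'rV[C]_n),
    [/\ V *m adjmx V = 1%:M, adjmx V *m V = 1%:M,
        diag_mx d = V *m A *m adjmx V & A = adjmx V *m diag_mx d *m V].
Proof.
move=> hA.
have nA : A \is normalmx.
  by apply/normalmxP; rewrite -adjmx_tc hA.
have /orthomx_spectralP eA := nA.
set P := spectralmx A in eA; set d := spectral_diag A in eA.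
have uP : P \is unitarymx := spectral_unitarymx A.
have PP : P *m adjmx P = 1%:M by rewrite adjmx_tc; apply/unitarymxP.
have iP : invmx P = adjmx P by rewrite adjmx_tc invmx_unitary.
have PP' : adjmx P *m P = 1%:M by rewrite -iP mulVmx // unitarymx_unit.
exists P, d; split => //; last by rewrite -iP.
by rewrite eA iP !mulmxA PP mul1mx -mulmxA PP mulmx1.
Qed.

Lemma diag_real n (V : 'M[C]_n) d A : adjmx A = A ->
   diag_mx d = V *m A *m adjmx V -> forall k, (d 0 k)^* = d 0 k.
Proof.
move=> hA hd k.
have : adjmx (diag_mx d) = diag_mx d by rewrite hd !adjmxM adjmxK hA mulmxA.
move/matrixP/(_ k k); by rewrite !mxE eqxx mulr1n.
Qed.

Lemma diag_psd_ge0 n (V : 'M[C]_n) d A : psd A ->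
   diag_mx d = V *m A *m adjmx V -> forall k, 0 <= d 0 k.
Proof.
move=> hA hd k.
have := psd_diag_ge0 k (psd_congr (adjmx V) hA).
by rewrite adjmxK -hd mxE eqxx mulr1n.
Qed.

End Spec.


Section Sqrt.
Variable R : realType.
Local Notation C := R[i].

Lemma adj_diag n (d : 'rV[C]_n) : (forall k, (d 0 k)^* = d 0 k) ->
  adjmx (diag_mx d) = diag_mx d.
Proof.
move=> h; apply/matrixP => a b; rewrite !mxE eq_sym.
by case: eqP => [->|_]; rewrite ?mulr1n ?mulr0n ?h ?rmorph0.
Qed.

Lemma conjV_mul n (V : 'M[C]_n) (D1 D2 : 'M[C]_n) : V *m adjmx V = 1%:M ->
  (adjmx V *m D1 *m V) *m (adjmx V *m D2 *m V) = adjmx V *m (D1 *m D2) *m V.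
Proof.
move=> h; rewrite !mulmxA; congr (_ *m _); congr (_ *m _).
by rewrite -mulmxA h mulmx1.
Qed.

Lemma msqrt_spec n (M : 'M[C]_n) : psd M ->
  psd (msqrt M) /\ msqrt M *m msqrt M = M.
Proof.
move=> hM; rewrite /msqrt.
suff hex : exists S : 'M[C]_n, psd S /\ S *m S = M by exact: (epsilon_spec _ _ hex).
have [V [d [VV VV' hd eM]]] := herm_spectral (psd_herm hM).
have d0 := diag_psd_ge0 hM hd.
pose q := \row_k sqrtC (sqrtC (d 0 k)).
pose r := \row_k sqrtC (d 0 k).
have q0 k : 0 <= q 0 k by rewrite mxE !sqrtC_ge0.
have r0 k : 0 <= r 0 k by rewrite mxE !sqrtC_ge0.
have qq : diag_mx q *m diag_mx q = diag_mx r.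
  by rewrite mulmx_diag; congr diag_mx; apply/rowP => k; rewrite !mxE -expr2 sqrtCK.
have rr : diag_mx r *m diag_mx r = diag_mx d.
  by rewrite mulmx_diag; congr diag_mx; apply/rowP => k; rewrite !mxE -expr2 sqrtCK.
exists (adjmx V *m diag_mx r *m V); split.
  have := psd_gram (diag_mx q *m V).
  rewrite adjmxM adj_diag; last by move=> k; rewrite geC0_conj.
  by rewrite mulmxA -[_ *m diag_mx q *m diag_mx q]mulmxA qq.
by rewrite conjV_mul // rr -eM.
Qed.

Definition pinv n (S : 'M[C]_n) : 'M[C]_n :=
  epsilon (inhabits 0) (fun Sp => [/\ adjmx Sp = Sp, S *m Sp = Sp *m S,
     S *m Sp *m S = S & Sp *m S *m Sp = Sp]).

Lemma pinv_spec n (S : 'M[C]_n) : adjmx S = S ->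
  [/\ adjmx (pinv S) = pinv S, S *m pinv S = pinv S *m S,
     S *m pinv S *m S = S & pinv S *m S *m pinv S = pinv S].
Proof.
move=> hS; rewrite /pinv.
set P := (fun Sp : 'M[C]_n => _).
suff hex : exists Sp, P Sp by exact: (epsilon_spec _ _ hex).
rewrite {}/P.
have [V [d [VV VV' hd eS]]] := herm_spectral hS.
have dr := diag_real hS hd.
pose e := \row_k (d 0 k)^-1.
exists (adjmx V *m diag_mx e *m V).
have ed : diag_mx d *m diag_mx e = diag_mx e *m diag_mx d by rewrite diag_mxC.
have ded : diag_mx d *m diag_mx e *m diag_mx d = diag_mx d.
  rewrite !mulmx_diag; congr diag_mx; apply/rowP => k; rewrite !mxE.
  by have [->|nz] := eqVneq (d 0 k) 0; rewrite ?mulr0 // mulfV ?mul1r.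
have ede : diag_mx e *m diag_mx d *m diag_mx e = diag_mx e.
  rewrite !mulmx_diag; congr diag_mx; apply/rowP => k; rewrite !mxE.
  by have [->|nz] := eqVneq (d 0 k) 0; rewrite ?invr0 ?mulr0 // mulVf ?mul1r.
split.
- rewrite !adjmxM adjmxK adj_diag ?mulmxA // => k.
  by rewrite mxE fmorphV; congr GRing.inv; exact: dr.
- by rewrite eS !conjV_mul // ed.
- by rewrite eS !conjV_mul // ded.
- by rewrite eS !conjV_mul // ede.
Qed.

End Sqrt.


Section Block.
Variable R : realType.
Local Notation C := R[i].

Lemma sum_deltar (T : finType) (x : T) (F : T -> C) :
  \sum_s F s * (s == x)%:R = F x.
Proof.
rewrite (bigD1 x) //= eqxx mulr1 big1 ?addr0 // => s /negbTE ->.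
by rewrite mulr0.
Qed.

Lemma sum_deltal (T : finType) (x : T) (F : T -> C) :
  \sum_s (x == s)%:R * F s = F x.
Proof.
rewrite -[RHS](sum_deltar x); apply: eq_bigr => s _.
by rewrite mulrC eq_sym.
Qed.

Lemma gram0 m n (M : 'M[C]_(m,n)) : adjmx M *m M = 0 -> M = 0.
Proof.
move=> h; apply/matrixP => a b.
have := congr1 (fun N : 'M[C]_n => N b b) h; rewrite !mxE => h2.
have hpos : forall k : 'I_m, true -> 0 <= adjmx M b k * M k b.
  by move=> k _; rewrite !mxE mulrC mul_conjC_ge0.
have := @psumr_eq0P _ _ xpredT (fun k => adjmx M b k * M k b) hpos h2 a isT.
rewrite /= !mxE => /eqP; rewrite mulf_eq0 conjC_eq0 orbb => /eqP ->//.
Qed.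

Lemma pinv_X n (X S : 'M[C]_n) : adjmx S = S -> adjmx X *m X = S *m S ->
  X *m pinv S *m S = X.
Proof.
move=> hS hX; have [hSp _ SSpS _] := pinv_spec hS.
set Sp := pinv S in hSp SSpS *.
pose E := 1%:M - Sp *m S.
have SE : S *m E = 0 by rewrite mulmxBr mulmx1 mulmxA SSpS subrr.
have : adjmx (X *m E) *m (X *m E) = 0.
  have -> : adjmx (X *m E) *m (X *m E) = adjmx (S *m E) *m (S *m E).
    by rewrite !adjmxM hS !mulmxA -(mulmxA (adjmx E) (adjmx X) X) hX !mulmxA.
  by rewrite SE adjmx0 mul0mx.
move/gram0; rewrite /E mulmxBr mulmx1 mulmxA => /eqP.
by rewrite subr_eq0 => /eqP <-.
Qed.

Lemma proj_tr n (N Pi : 'M[C]_n) : psd N -> adjmx Pi = Pi -> Pi *m Pi = Pi ->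
  \tr (N *m Pi) <= \tr N.
Proof.
move=> hN hP PP; pose Q := 1%:M - Pi.
have hQ : adjmx Q = Q by rewrite /Q adjmxB adjmx1 hP.
have QQ : Q *m Q = Q.
  by rewrite /Q mulmxBr mulmx1 mulmxBl mul1mx PP subrr subr0.
have := psd_tr_ge0 (psd_congr Q hN).
rewrite hQ mxtrace_mulC mulmxA QQ /Q mulmxBl mul1mx linearB /= subr_ge0 => ?.
by rewrite mxtrace_mulC.
Qed.

Definition emb dA dB (i : 'I_dA) : 'M[C]_(dA * dB, dB) :=
  \matrix_(r, c) ((r == mxtens_index (i, c))%:R).

Lemma idx_eq dA dB (a b : 'I_dA) (k l : 'I_dB) :
  (mxtens_index (a, k) == mxtens_index (b, l)) = (a == b) && (k == l).
Proof.
apply/eqP/andP => [/(can_inj (@mxtens_indexK dA dB)) [-> ->] //|[/eqP-> /eqP->]//].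
Qed.

Lemma mul_emb dA dB p (A : 'M[C]_(p, dA * dB)) j r l :
  (A *m emb dB j) r l = A r (mxtens_index (j, l)).
Proof. by rewrite mxE; under eq_bigr do rewrite mxE; rewrite sum_deltar. Qed.

Lemma adj_emb_mul dA dB p (A : 'M[C]_(dA * dB, p)) i k l :
  (adjmx (emb dB i) *m A) k l = A (mxtens_index (i, k)) l.
Proof.
rewrite mxE; under eq_bigr do rewrite !mxE conjC_nat.
rewrite (eq_bigr (fun s => A s l * (s == mxtens_index (i, k))%:R)) ?sum_deltar //.
by move=> s _; rewrite mulrC.
Qed.

Lemma emb_block dA dB (N : 'M[C]_(dA * dB)) i j :
  adjmx (emb dB i) *m N *m emb dB j = blockB N i j.
Proof. by apply/matrixP => k l; rewrite mul_emb adj_emb_mul mxE. Qed.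

Lemma emb_orth dA dB (i j : 'I_dA) :
  adjmx (emb dB i) *m emb dB j = if i == j then 1%:M else 0.
Proof.
apply/matrixP => k l; rewrite mul_emb !mxE idx_eq.
by rewrite conjC_nat (eq_sym j) (eq_sym l); case: (i == j); rewrite !mxE ?andbF.
Qed.

Lemma emb_mul_entry dA dB p (T : 'M[C]_(dB, p)) (i a : 'I_dA) k c :
  (emb dB i *m T) (mxtens_index (a, k)) c = (a == i)%:R * T k c.
Proof.
rewrite mxE; under eq_bigr do rewrite mxE idx_eq.
case: (a == i) => /=; last by rewrite mul0r big1 // => c' _; rewrite mul0r.
by rewrite mul1r sum_deltal.
Qed.

Lemma mul_adj_emb_entry dA dB p (B : 'M[C]_(p, dB)) (j b : 'I_dA) r l :
  (B *m adjmx (emb dB j)) r (mxtens_index (b, l)) = (b == j)%:R * B r l.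
Proof.
rewrite mxE; under eq_bigr do rewrite !mxE conjC_nat idx_eq.
case: (b == j) => /=; last by rewrite mul0r big1 // => c' _; rewrite mulr0.
rewrite mul1r (eq_bigr (fun c => B r c * (c == l)%:R)) ?sum_deltar //.
by move=> c _; rewrite eq_sym.
Qed.

Lemma emb_entry dA dB (T : 'M[C]_dB) (i j a b : 'I_dA) k l :
  (emb dB i *m T *m adjmx (emb dB j)) (mxtens_index (a, k)) (mxtens_index (b, l))
  = ((a == i) && (b == j))%:R * T k l.
Proof.
by rewrite mul_adj_emb_entry emb_mul_entry mulrA -natrM mulnb andbC.
Qed.

Lemma tens_delta dA dB (a : 'I_dA) (T : 'M[C]_dB) :
  delta_mx a a *t T = emb dB a *m T *m adjmx (emb dB a).
Proof.
apply/matrixP => r s.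
case: (mxtens_indexP r) => a1 k; case: (mxtens_indexP s) => b1 l.
by rewrite tensmxE emb_entry mxE.
Qed.

Lemma block_decomp dA dB (M : 'M[C]_(dA * dB)) :
  M = \sum_i \sum_j emb dB i *m blockB M i j *m adjmx (emb dB j).
Proof.
apply/matrixP => r s.
case: (mxtens_indexP r) => a k; case: (mxtens_indexP s) => b l.
rewrite summxE (bigD1 a) //= summxE (bigD1 b) //= emb_entry !eqxx mul1r mxE.
rewrite big1 ?addr0; last first.
  by move=> j /negbTE hj; rewrite emb_entry eq_sym hj andbF mul0r.
rewrite big1 ?addr0 // => i /negbTE hi; rewrite summxE big1 // => j _.
by rewrite emb_entry eq_sym hi mul0r.
Qed.

Lemma trace_blocks dA dB (M : 'M[C]_(dA * dB)) :
  \tr M = \sum_i \tr (blockB M i i).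
Proof.
rewrite /mxtrace (reindex (@mxtens_index dA dB)) /=; last first.
  by exists (@mxtens_unindex dA dB) => p _; [apply: mxtens_indexK | apply: mxtens_unindexK].
rewrite pair_big_dep; apply: eq_bigr => -[a k] _ /=.
by rewrite mxE.
Qed.

Lemma blockB_herm dA dB (M : 'M[C]_(dA * dB)) i j : adjmx M = M ->
  blockB M j i = adjmx (blockB M i j).
Proof.
move=> h; apply/matrixP => k l; rewrite !mxE.
by rewrite -{1}h !mxE.
Qed.

Lemma blockBB dA dB (M N : 'M[C]_(dA * dB)) i j :
  blockB (M - N) i j = blockB M i j - blockB N i j.
Proof. by apply/matrixP => k l; rewrite !mxE. Qed.

Lemma blockBZ dA dB c (M : 'M[C]_(dA * dB)) i j :
  blockB (c *: M) i j = c *: blockB M i j.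
Proof. by apply/matrixP => k l; rewrite !mxE. Qed.

Lemma blockB_sum dA dB (I : finType) (F : I -> 'M[C]_(dA * dB)) i j :
  blockB (\sum_k F k) i j = \sum_k blockB (F k) i j.
Proof.
apply/matrixP => k l; rewrite !mxE !summxE; apply: eq_bigr => x _.
by rewrite mxE.
Qed.

Lemma blockB_tens dA dB (A : 'M[C]_dA) (T : 'M[C]_dB) i j :
  blockB (A *t T) i j = A i j *: T.
Proof. by apply/matrixP => k l; rewrite mxE tensmxE !mxE. Qed.

End Block.


Section LB.
Variable R : realType.
Local Notation C := R[i].

Lemma pinv_facts n (X : 'M[C]_n) (S := msqrt (adjmx X *m X)) (Sp := pinv S)
  (P := X *m Sp) :
  [/\ psd S, adjmx P *m P = Sp *m S, P *m (Sp *m S) = P, P *m S = X &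
      \tr (adjmx P *m X) = \tr S].
Proof.
have [hSpsd hSS] := msqrt_spec (psd_gram X).
have hS := psd_herm hSpsd.
have [hSp comm SSpS SpSSp] := pinv_spec hS.
rewrite -/S in hSpsd hSS hS hSp comm SSpS SpSSp *.
rewrite -/Sp in hSp comm SSpS SpSSp *.
have adjP : adjmx P = Sp *m adjmx X by rewrite /P adjmxM hSp.
have PS : P *m S = X by rewrite /P pinv_X.
split => //.
- rewrite adjP -mulmxA (mulmxA (adjmx X)) -hSS.
  by rewrite -(mulmxA S S Sp) comm !mulmxA SpSSp.
- by rewrite /P -comm -!mulmxA (mulmxA Sp S Sp) SpSSp.
- rewrite adjP -mulmxA -hSS mxtrace_mulC -mulmxA comm mulmxA.
  by rewrite SSpS.
Qed.

Lemma LB dA dB (N : 'M[C]_(dA * dB)) (X : 'M[C]_dB) i j : psd N ->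
  blockB N i j = - X -> blockB N j i = - adjmx X ->
  \tr (msqrt (adjmx X *m X)) + \tr (msqrt (adjmx X *m X))
    <= \tr (blockB N i i) + \tr (blockB N j j).
Proof.
move=> hN hij hji.
have [hSpsd ePP eP PS trPX] := pinv_facts X.
set S := msqrt _ in hSpsd ePP eP PS trPX *.
set Sp := pinv S in ePP eP PS trPX *.
set P := X *m Sp in ePP eP PS trPX *.
pose Y := emb R dB i *m P + emb R dB j.
have H := psd_tr_ge0 (psd_congr Y hN).
have eY : adjmx Y *m N *m Y = adjmx P *m blockB N i i *m P + adjmx P *m blockB N i j
     + (blockB N j i *m P + blockB N j j).
  rewrite /Y adjmxD adjmxM !mulmxDr !mulmxDl -!emb_block !mulmxA.
  by rewrite addrACA.
rewrite eY hij hji !mxtraceD in H.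
have h1 : \tr (adjmx P *m blockB N i i *m P) <= \tr (blockB N i i).
  rewrite mxtrace_mulC mulmxA mxtrace_mulC; apply: proj_tr.
  - by rewrite -emb_block; apply: psd_congr.
  - by rewrite adjmxM adjmxK.
  - by rewrite -mulmxA (mulmxA (adjmx P)) ePP mulmxA eP.
have h2 : \tr (adjmx P *m - X) = - \tr S by rewrite mulmxN linearN /= trPX.
have h3 : \tr (- adjmx X *m P) = - \tr S.
  rewrite mulNmx linearN /= -(adjmxK P) -adjmxM mxtrace_adj trPX.
  by rewrite geC0_conj // psd_tr_ge0.
rewrite h2 h3 in H.
have H' : \tr S + \tr S <= \tr (adjmx P *m blockB N i i *m P) + \tr (blockB N j j).
  rewrite -subr_ge0; apply: (le_trans H); rewrite le_eqVlt; apply/orP; left.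
  by apply/eqP; ring.
by apply: (le_trans H'); rewrite lerD2r.
Qed.

End LB.


Section States.
Variable R : realType.
Local Notation C := R[i].

Lemma tr_gram0 m n (S : 'M[C]_(m,n)) : \tr (adjmx S *m S) = 0 -> S = 0.
Proof.
move=> h; apply/matrixP => a b; rewrite mxE.
have hpos : forall k : 'I_n, true -> 0 <= (adjmx S *m S) k k.
  move=> k _; rewrite mxE; apply: sumr_ge0 => l _.
  by rewrite !mxE mulrC mul_conjC_ge0.
have := @psumr_eq0P _ _ xpredT (fun k => (adjmx S *m S) k k) hpos h b isT.
rewrite /= mxE => h2.
have hpos2 : forall k : 'I_m, true -> 0 <= adjmx S b k * S k b.
  by move=> k _; rewrite !mxE mulrC mul_conjC_ge0.
have := @psumr_eq0P _ _ xpredT (fun k => adjmx S b k * S k b) hpos2 h2 a isT.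
by rewrite /= !mxE => /eqP; rewrite mulf_eq0 conjC_eq0 orbb => /eqP.
Qed.

Lemma psd_tr0 n (A : 'M[C]_n) : psd A -> \tr A = 0 -> A = 0.
Proof.
move=> hA h0; have [hS hSS] := msqrt_spec hA.
have e : adjmx (msqrt A) *m msqrt A = A by rewrite psd_herm.
rewrite -e in h0; have := tr_gram0 h0 => h.
by rewrite -e h adjmx0 mul0mx.
Qed.

Lemma delta_state n (k : 'I_n) : is_state (delta_mx k k : 'M[C]_n).
Proof.
split.
  have := psd_gram (delta_mx 0 k : 'rV[C]_n).
  have -> : adjmx (delta_mx 0 k : 'rV[C]_n) = delta_mx k 0.
    by apply/matrixP => a b; rewrite !mxE conjC_nat andbC.
  by rewrite mul_delta_mx.
rewrite /mxtrace (bigD1 k) //= mxE !eqxx /= big1 ?addr0 // => j /negbTE hj.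
by rewrite mxE hj.
Qed.

Lemma delta_incoh n (k : 'I_n) : incoherent_state (delta_mx k k : 'M[C]_n).
Proof.
split; first exact: delta_state.
move=> i j hij; rewrite mxE; case: eqP => [ei|] //=; case: eqP => [ej|] //=.
by move: hij; rewrite ei ej eqxx.
Qed.

End States.


Section UB.
Variable R : realType.
Local Notation C := R[i].
Local Open Scope complex_scope.

Lemma exch_neq (V : zmodType) n (F : 'I_n -> 'I_n -> V) :
  \sum_i \sum_(j | i != j) F i j = \sum_i \sum_(j | i != j) F j i.
Proof.
rewrite (exchange_big_dep xpredT) //=; apply: eq_bigr => i _.
by apply: eq_bigl => j; rewrite eq_sym.
Qed.

Lemma h4 (V : zmodType) (a b c d : V) : a - b - (c - d) = a + d - (b + c).
Proof. by rewrite opprB opprD addrA [a + d]addrC addrAC addrA addrC !addrA [d + a]addrC addrAC. Qed.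

Variables (dA dB : nat) (rho : 'M[C]_(dA * dB)).
Hypothesis hrho : psd rho.
Hypothesis trrho : \tr rho = 1.

Local Notation E := (emb R dB).
Definition Xb i j := blockB rho i j.
Definition Sb i j := msqrt (adjmx (Xb i j) *m Xb i j).
Definition Pb i j := Xb i j *m pinv (Sb i j).
Definition Ab i j := Pb i j *m Sb i j *m adjmx (Pb i j).
Definition Yb i j := E i *m Pb i j - E j.
Definition Fb i j := Yb i j *m Sb i j *m adjmx (Yb i j).
Definition Dg i := Xb i i + 2^-1 *: \sum_(j | i != j) Ab i j
                          + 2^-1 *: \sum_(j | i != j) Sb j i.
Definition Dm := \sum_i E i *m Dg i *m adjmx (E i).

Lemma Sb_psd i j : psd (Sb i j).
Proof. by have [] := pinv_facts (Xb i j). Qed.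

Lemma Fb_psd i j : psd (Fb i j).
Proof.
by rewrite /Fb -{1}(adjmxK (Yb i j)); apply: psd_congr; apply: Sb_psd.
Qed.

Lemma Fb_expand i j : Fb i j =
  E i *m Ab i j *m adjmx (E i) + E j *m Sb i j *m adjmx (E j)
  - (E i *m Xb i j *m adjmx (E j) + E j *m Xb j i *m adjmx (E i)).
Proof.
have [_ _ _ PS _] := pinv_facts (Xb i j).
rewrite -/(Sb i j) -/(Pb i j) in PS.
have SP : Sb i j *m adjmx (Pb i j) = Xb j i.
  by rewrite [Xb j i]/Xb (blockB_herm _ _ (psd_herm hrho)) -/(Xb i j) -PS adjmxM (psd_herm (Sb_psd i j)).
rewrite /Fb /Yb adjmxB adjmxM !mulmxBl !mulmxBr.
rewrite -(mulmxA (E i) (Pb i j) (Sb i j)) PS.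
rewrite (mulmxA (E j *m Sb i j)) -(mulmxA (E j) (Sb i j) (adjmx (Pb i j))) SP.
rewrite (mulmxA (E i *m Xb i j)) /Ab PS (mulmxA (E i) (Xb i j)).
exact: h4.
Qed.


Definition ta := \sum_i E i *m Xb i i *m adjmx (E i).
Definition tb := \sum_i \sum_(j | i != j) E i *m Ab i j *m adjmx (E i).
Definition tc := \sum_i \sum_(j | i != j) E i *m Sb j i *m adjmx (E i).
Definition toff := \sum_i \sum_(j | i != j) E i *m Xb i j *m adjmx (E j).

Lemma rho_decomp : rho = ta + toff.
Proof.
rewrite {1}(block_decomp rho) /ta /toff -big_split; apply: eq_bigr => i _.
by rewrite (bigD1 i) //=; congr (_ + _); apply: eq_bigl => j; rewrite eq_sym.
Qed.

Lemma Dm_expand : Dm = ta + 2^-1 *: tb + 2^-1 *: tc.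
Proof.
rewrite /Dm /ta /tb /tc !scaler_sumr -!big_split; apply: eq_bigr => i _.
rewrite /Dg !mulmxDr !mulmxDl -!scalemxAr -!scalemxAl !mulmx_sumr !mulmx_suml.
done.
Qed.

Lemma sumF : \sum_i \sum_(j | i != j) Fb i j = tb + tc - (toff + toff).
Proof.
under eq_bigr do under eq_bigr do rewrite Fb_expand.
under eq_bigr do rewrite sumrB !big_split /=.
rewrite sumrB !big_split /= /tb /tc /toff.
congr (_ + _ - (_ + _)).
  exact: (exch_neq (fun i j => E j *m Sb i j *m adjmx (E j))).
exact: (exch_neq (fun i j => E j *m Xb j i *m adjmx (E i))).
Qed.

Lemma DmB : Dm - rho = 2^-1 *: \sum_i \sum_(j | i != j) Fb i j.
Proof.
rewrite Dm_expand rho_decomp sumF scalerBr scalerDr scalerDr.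
have hh : (2^-1 : C) *: toff + 2^-1 *: toff = toff.
  have h2 : (2^-1 : C) + 2^-1 = 1 by field.
  by rewrite -scalerDl h2 scale1r.
by rewrite hh -(addrA ta) [ta + (_ + _)]addrC addrKA.
Qed.


Lemma h2C : (2^-1 : C) + 2^-1 = 1.
Proof. by field. Qed.

Lemma Dm_psd_diff : psd (Dm - rho).
Proof.
rewrite DmB; apply: psd_scale; first by rewrite invr_ge0 ler0n.
by apply: psd_sum => i _; apply: psd_sum => j _; apply: Fb_psd.
Qed.

Lemma Dm_psd : psd Dm.
Proof. by rewrite -(subrK rho Dm) addrC; apply: psd_add => //; apply: Dm_psd_diff. Qed.

Lemma tr_conj_emb (i : 'I_dA) (M : 'M[C]_dB) : \tr (E i *m M *m adjmx (E i)) = \tr M.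
Proof. by rewrite mxtrace_mulC mulmxA emb_orth eqxx mul1mx. Qed.

Lemma trAb i j : \tr (Ab i j) = \tr (Sb i j).
Proof.
have [_ _ _ PS trPX] := pinv_facts (Xb i j).
rewrite -/(Sb i j) -/(Pb i j) in PS trPX.
by rewrite /Ab mxtrace_mulC mulmxA -trPX -PS mulmxA.
Qed.

Lemma trDm : \tr Dm = 1 + \sum_i \sum_(j | i != j) \tr (Sb i j).
Proof.
rewrite Dm_expand !linearD !linearZ /= /ta /tb /tc !linear_sum /=.
under eq_bigr do rewrite tr_conj_emb.
have e1 i : \tr (\sum_(j | i != j) E i *m Ab i j *m adjmx (E i))
    = \sum_(j | i != j) \tr (Sb i j).
  by rewrite linear_sum; apply: eq_bigr => j _ /=; rewrite tr_conj_emb trAb.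
have e2 i : \tr (\sum_(j | i != j) E i *m Sb j i *m adjmx (E i))
    = \sum_(j | i != j) \tr (Sb j i).
  by rewrite linear_sum; apply: eq_bigr => j _ /=; rewrite tr_conj_emb.
rewrite (eq_bigr _ (fun i _ => e1 i)) (eq_bigr _ (fun i _ => e2 i)).
rewrite -(exch_neq (fun i j => \tr (Sb i j))).
have -> : \sum_i \tr (Xb i i) = 1 by rewrite -trrho [in RHS]trace_blocks.
by rewrite -addrA -mulrDl h2C mul1r.
Qed.


Lemma Cl1_C : (Cl1 rho)%:C = \sum_i \sum_(j | i != j) \tr (Sb i j).
Proof.
rewrite /Cl1 rmorph_sum; apply: eq_bigr => i _.
rewrite rmorph_sum; apply: eq_bigr => j _.
have -> : tracenorm (blockB rho i j) = complex.Re (\tr (Sb i j)) by [].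
by apply: RRe_real; apply: ger0_real; apply: psd_tr_ge0; apply: Sb_psd.
Qed.

Lemma Dg_block i : adjmx (E i) *m Dm *m E i = Dg i.
Proof.
rewrite /Dm mulmx_sumr mulmx_suml (bigD1 i) //= big1 ?addr0.
  by rewrite !mulmxA emb_orth eqxx mul1mx -mulmxA emb_orth eqxx mulmx1.
move=> k /negbTE hk.
by rewrite !mulmxA emb_orth eq_sym hk !mul0mx.
Qed.

Lemma Dg_psd i : psd (Dg i).
Proof. by rewrite -Dg_block; apply: psd_congr; apply: Dm_psd. Qed.

Lemma trDm_sum : \tr Dm = \sum_i \tr (Dg i).
Proof. by rewrite /Dm linear_sum; apply: eq_bigr => i _ /=; rewrite tr_conj_emb. Qed.

Variable tau : 'M[C]_dB.
Hypothesis htau : is_state tau.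

Lemma Dm_IQ : let lam := 1 + Cl1 rho in
  IQ (real_complex R lam^-1 *: Dm).
Proof.
move=> lam.
have hlam : 0 < lam.
  rewrite /lam ltr_pwDl // /Cl1; apply: sumr_ge0 => i _; apply: sumr_ge0 => j _.
  have := psd_tr_ge0 (Sb_psd i j); rewrite lecE => /andP[_ h].
  exact: h.
have trD : \tr Dm = lam%:C by rewrite trDm -Cl1_C rmorphD rmorph1.
pose c i := \tr (Dg i).
have c0 i : 0 <= c i by apply: psd_tr_ge0; apply: Dg_psd.
exists dA, (fun i => complex.Re (c i) / lam), (fun i => delta_mx i i),
  (fun i => if c i == 0 then tau else (c i)^-1 *: Dg i).
have Re0 z : 0 <= z -> 0 <= complex.Re z by rewrite lecE => /andP[_ h].
split.
- by move=> k; apply: divr_ge0; [apply: Re0 | apply: ltW].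
- rewrite -mulr_suml -raddf_sum -trDm_sum trD /=.
  by rewrite mulfV // gt_eqF.
- by move=> k; apply: delta_incoh.
- move=> k; case: eqP => // /eqP ckn; split.
    by apply: psd_scale; [rewrite invr_ge0 | apply: Dg_psd].
  by rewrite linearZ /= -/(c k) mulVf.
rewrite /Dm scaler_sumr; apply: eq_bigr => k _; rewrite tens_delta.
have -> : (complex.Re (c k) / lam)%:C = c k * (lam^-1)%:C.
  by rewrite rmorphM; congr (_ * _); apply: RRe_real; apply: ger0_real.
case: eqP => [ck0|/eqP ckn].
  have Dg0 : Dg k = 0 by apply: psd_tr0 (Dg_psd k) ck0.
  by rewrite Dg0 ck0 mul0r scale0r mulmx0 mul0mx scaler0.
rewrite -scalemxAr -scalemxAl scalerA; congr (_ *: _).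
by rewrite mulrAC mulfV ?mul1r.
Qed.

End UB.


Section Final.
Variable R : realType.
Local Notation C := R[i].
Local Open Scope complex_scope.

Lemma tr_tens m n (A : 'M[C]_m) (B : 'M[C]_n) : \tr (A *t B) = \tr A * \tr B.
Proof.
rewrite trace_blocks /mxtrace mulr_suml; apply: eq_bigr => i _.
by rewrite blockB_tens mulr_sumr; apply: eq_bigr => k _; rewrite mxE.
Qed.

Lemma IQ_props dA dB (sigma : 'M[C]_(dA * dB)) : IQ sigma ->
  \tr sigma = 1 /\ forall i j, i != j -> blockB sigma i j = 0.
Proof.
move=> [K [p [s [t [p0 p1 hs ht ->]]]]]; split.
  rewrite linear_sum /= -[1](rmorph1 (real_complex R)) -p1 rmorph_sum.
  apply: eq_bigr => k _ /=; rewrite linearZ /= tr_tens.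
  by have [[_ ->] _] := hs k; have [_ ->] := ht k; rewrite !mulr1.
move=> i j hij; rewrite blockB_sum big1 // => k _.
by rewrite blockBZ blockB_tens; have [_ ->] := hs k; rewrite // scale0r scaler0.
Qed.


Lemma sum_neq_const (V : zmodType) n (i : 'I_n) (x : V) :
  \sum_(j | i != j) x = x *+ n.-1.
Proof.
rewrite sumr_const; congr (_ *+ _).
have := cardC1 i; rewrite card_ord => <-; apply: eq_card => j.
by rewrite !inE eq_sym.
Qed.

Lemma lower_core dA dB (hdA : (2 <= dA)%N) (rho : 'M[C]_(dA * dB))
  (hrho : is_state rho) (sigma : 'M[C]_(dA * dB)) (hs : IQ sigma) (mu : R)
  (hN : psd (mu%:C *: sigma - rho)) : 1 + Cl1 rho / (dA%:R - 1) <= mu.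
Proof.
have [hr tr1] := hrho; have [trs offs] := IQ_props hs.
set N := _ - rho in hN.
have hb i j : i != j -> blockB N i j = - blockB rho i j.
  by move=> hij; rewrite /N blockBB blockBZ offs // scaler0 sub0r.
have key i j : i != j -> \tr (Sb rho i j) + \tr (Sb rho i j)
    <= \tr (blockB N i i) + \tr (blockB N j j).
  move=> hij; apply: LB => //; first exact: hb.
  by rewrite hb 1?eq_sym // (blockB_herm _ _ (psd_herm hr)).
have sle : \sum_i \sum_(j | i != j) (\tr (Sb rho i j) + \tr (Sb rho i j))
    <= \sum_i \sum_(j | i != j) (\tr (blockB N i i) + \tr (blockB N j j)).
  by apply: ler_sum => i _; apply: ler_sum => j hij; apply: key.
have L : \sum_i \sum_(j | i != j) (\tr (Sb rho i j) + \tr (Sb rho i j))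
    = (Cl1 rho)%:C + (Cl1 rho)%:C.
  by rewrite Cl1_C -big_split; apply: eq_bigr => i _; rewrite -big_split.
have Rr : \sum_i \sum_(j | i != j) (\tr (blockB N i i) + \tr (blockB N j j))
    = \tr N *+ dA.-1 + \tr N *+ dA.-1.
  rewrite (eq_bigr (fun i => \sum_(j | i != j) \tr (blockB N i i)
                 + \sum_(j | i != j) \tr (blockB N j j))); last first.
    by move=> i _; rewrite big_split.
  rewrite big_split /= (exch_neq (fun i j => \tr (blockB N j j))) /=.
  by rewrite (eq_bigr _ (fun i _ => sum_neq_const i _)) sumrMnl -trace_blocks.
rewrite L Rr /N linearB /= linearZ /= trs tr1 mulr1 in sle.
have e : ((mu%:C - 1) *+ dA.-1) = ((mu - 1) *+ dA.-1)%:C :> C.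
  by rewrite rmorphMn rmorphB rmorph1.
rewrite e -!rmorphD lecR in sle.
have hd : dA.-1%:R = dA%:R - 1 :> R.
  by rewrite -subn1 natrB ?(leq_trans _ hdA).
have hd0 : 0 < dA%:R - 1 :> R by rewrite -hd ltr0n -subn1 subn_gt0.
rewrite -mulr_natr hd in sle.
rewrite -lerBrDl ler_pdivrMr //.
lra.
Qed.

Lemma Cl1_ge0 dA dB (rho : 'M[C]_(dA * dB)) : 0 <= Cl1 rho.
Proof.
rewrite -ler0c Cl1_C; apply: sumr_ge0 => i _; apply: sumr_ge0 => j _.
by apply: psd_tr_ge0; apply: Sb_psd.
Qed.

Lemma pow2log (x : R) : 0 < x -> 2 `^ (ln x / ln 2) = x.
Proof.
move=> x0; have l2 : 0 < ln (2 : R) by rewrite ln_gt0 // ltr1n.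
rewrite /powR pnatr_eq0 /= divfK ?gt_eqF //.
exact: lnK.
Qed.

Lemma le_log2 (x l : R) : 0 < x -> x <= 2 `^ l -> ln x / ln 2 <= l.
Proof.
move=> x0 h; have l2 : 0 < ln (2 : R) by rewrite ln_gt0 // ltr1n.
rewrite ler_pdivrMr // -ln_powR ler_ln ?posrE // powR_gt0.
Qed.

End Final.

Theorem proposition8 (R : realType) (dA dB : nat) (hdA : (2 <= dA)%N)
  (rho : 'M[R[i]]_(dA * dB)) (hrho : is_state rho) :
  Cmax rho \is a fin_num /\
  1 + Cl1 rho / (dA%:R - 1) <= 2 `^ (fine (Cmax rho)) <= 1 + Cl1 rho.
Proof.
have [hr tr1] := hrho.
have [tau htau] : exists tau : 'M[R[i]]_dB, is_state tau.
  case: dB rho hrho hr tr1 => [|dB'] rho hrho hr tr1.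
    exfalso; have : \tr rho = 0.
      by rewrite /mxtrace big1 // => i _; have := leq_trans (ltn_ord i) (eq_leq (muln0 dA)).
    by rewrite tr1 => /eqP; rewrite oner_eq0.
  by exists (delta_mx ord0 ord0); apply: delta_state.
set lam := 1 + Cl1 rho.
have hlam1 : 1 <= lam by rewrite /lam lerDl Cl1_ge0.
have hlam : 0 < lam by apply: lt_le_trans hlam1.
have l2 : 0 < ln (2 : R) by rewrite ln_gt0 // ltr1n.
set l0 := ln lam / ln 2.
have h2l0 : 2 `^ l0 = lam by apply: pow2log.
have l00 : 0 <= l0 by apply: divr_ge0; [apply: ln_ge0 | apply: ltW].
set sigma0 := real_complex R lam^-1 *: Dm rho.
have hIQ : IQ sigma0 by apply: (Dm_IQ hr tr1 htau).
have hD : (Dmax rho sigma0 <= l0%:E)%E.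
  apply: ereal_inf_lbound; exists l0 => //; split => //.
  rewrite /loewner h2l0 /sigma0 scalerA -rmorphM mulfV ?gt_eqF // rmorph1 scale1r.
  exact: Dm_psd_diff.
have hC : (Cmax rho <= l0%:E)%E.
  by apply: le_trans hD; apply: ereal_inf_lbound; exists sigma0.
set c := 1 + Cl1 rho / (dA%:R - 1).
have hd0 : 0 < dA%:R - 1 :> R by rewrite subr_gt0 ltr1n.
have hc1 : 1 <= c by rewrite /c lerDl divr_ge0 ?Cl1_ge0 // ltW.
have hc : 0 < c by apply: lt_le_trans hc1.
set lb := ln c / ln 2.
have hL : (lb%:E <= Cmax rho)%E.
  apply/ereal_infP => y [s hs <-]; apply/ereal_infP => y' [l [hl0 hlo] <-].
  rewrite lee_fin; apply: le_log2 => //.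
  exact: (lower_core hdA hrho hs hlo).
move: hL hC; case: (Cmax rho) => [r| |] //= hL hC.
rewrite !lee_fin in hL hC; split => //.
apply/andP; split.
  by rewrite -{1}(pow2log hc); apply: ler_powR => //; rewrite ler1n.
by rewrite -h2l0; apply: ler_powR => //; rewrite ler1n.
Qed.
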